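(* Let $\mathcal{G}=(G,\odot,\leq)$ be a real continuous Alo-group with $G$ an open interval of $\mathbb{R}$, and let $\tilde A$ be an $n\times n$ $[\mathcal{G}]$-reciprocal IPCM. Then: (1) if $\tilde A$ is Liu's $[\mathcal{G}]$-consistent, then $\tilde A$ is approximately $[\mathcal{G}]$-consistent; (2) if $\tilde A$ is approximately $[\mathcal{G}]$-consistent, then $\tilde A$ is $[\mathcal{G}]$-consistent.
   Context: An Alo-group $(G,\odot,\leq)$ is an Abelian group with identity $e$ and a weak order $\leq$ such that $a\leq b\Rightarrow a\odot c\leq b\odot c$; real means $G\subseteq\mathbb{R}$ with usual order, continuous means $\odot$ is continuous. $[G]=\{[a^-,a^+]: a^-,a^+\in G,\ a^-\leq a^+\}$; $\tilde a^{(-1)}=[(a^+)^{(-1)},(a^-)^{(-1)}]$; $\tilde a\odot_{[G]}\tilde b=\{a\odot b: a\in\tilde a,b\in\tilde b\}$. An IPCM $\tilde A=([a^-_{ij},a^+_{ij}])$ is an $n\times n$ matrix with entries in $[G]$; $[\mathcal{G}]$-reciprocal means $\tilde a_{ji}=\tilde a_{ij}^{(-1)}$. A PCM $(c_{ij})$ over $G$ is $\mathcal{G}$-consistent if $c_{ik}=c_{ij}\odot c_{jk}$ for all $i,j,k$. For a permutation $\sigma$ of $\{1,\dots,n\}$, let $l^\sigma_{ij}=a^-_{\sigma(i)\sigma(j)}$ if $i<j$, $e$ if $i=j$, $a^+_{\sigma(i)\sigma(j)}$ if $i>j$, and $r^\sigma_{ij}=a^+_{\sigma(i)\sigma(j)}$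 if $i<j$, $e$ if $i=j$, $a^-_{\sigma(i)\sigma(j)}$ if $i>j$. $\tilde A$ is Liu's $[\mathcal{G}]$-consistent if $L^\sigma=(l^\sigma_{ij})$ and $R^\sigma=(r^\sigma_{ij})$ are $\mathcal{G}$-consistent for $\sigma$ the identity permutation; approximately $[\mathcal{G}]$-consistent if there exists a permutation $\sigma$ such that $L^\sigma$ and $R^\sigma$ are $\mathcal{G}$-consistent; and $[\mathcal{G}]$-consistent if $\tilde a_{ij}\odot_{[G]}\tilde a_{jk}\odot_{[G]}\tilde a_{ki}=\tilde a_{ik}\odot_{[G]}\tilde a_{kj}\odot_{[G]}\tilde a_{ji}$ for all $i,j,k$. *)

(* Defs.v *)
From Stdlib Require Import Reals.
From Coquelicot Require Import Rbar.
Open Scope R_scope.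

Definition is_open_interval (G : R -> Prop) : Prop :=
  exists a b : Rbar, forall x : R, G x <-> (Rbar_lt a x /\ Rbar_lt x b).

Definition real_cont_alo_group (G : R -> Prop) (op : R -> R -> R) (e : R)
    (inv : R -> R) : Prop :=
  (forall a b, G a -> G b -> G (op a b)) /\
  (forall a b c, G a -> G b -> G c -> op (op a b) c = op a (op b c)) /\
  (forall a b, G a -> G b -> op a b = op b a) /\
  G e /\
  (forall a, G a -> op e a = a) /\
  (forall a, G a -> G (inv a) /\ op a (inv a) = e) /\
  (forall a b c, G a -> G b -> G c -> a <= b -> op a c <= op b c) /\
  (forall x y, G x -> G y -> forall eps, 0 < eps -> exists delta, 0 < delta /\
     forall x' y', G x' -> G y' -> Rabs (x' - x) < delta -> Rabs (y' - y) < delta ->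
       Rabs (op x' y' - op x y) < eps).

(* An n x n IPCM over [G]: entries [lo i j, hi i j] with lo, hi in G and lo <= hi
   (indices 0..n-1). *)
Definition IPCM (G : R -> Prop) (n : nat) (lo hi : nat -> nat -> R) : Prop :=
  forall i j, (i < n)%nat -> (j < n)%nat ->
    G (lo i j) /\ G (hi i j) /\ lo i j <= hi i j.

(* [G]-reciprocal: a_ji = a_ij^(-1) = [inv (hi i j), inv (lo i j)]. *)
Definition G_reciprocal (inv : R -> R) (n : nat) (lo hi : nat -> nat -> R) : Prop :=
  forall i j, (i < n)%nat -> (j < n)%nat ->
    lo j i = inv (hi i j) /\ hi j i = inv (lo i j).

Definition G_consistent_PCM (op : R -> R -> R) (n : nat) (c : nat -> nat -> R) : Prop :=
  forall i j k, (i < n)%nat -> (j < n)%nat -> (k < n)%nat ->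
    c i k = op (c i j) (c j k).

Definition is_perm (n : nat) (sigma : nat -> nat) : Prop :=
  (forall i, (i < n)%nat -> (sigma i < n)%nat) /\
  (forall i j, (i < n)%nat -> (j < n)%nat -> sigma i = sigma j -> i = j).

Definition Lmat (e : R) (lo hi : nat -> nat -> R) (sigma : nat -> nat)
    (i j : nat) : R :=
  if Nat.ltb i j then lo (sigma i) (sigma j)
  else if Nat.eqb i j then e else hi (sigma i) (sigma j).

Definition Rmat (e : R) (lo hi : nat -> nat -> R) (sigma : nat -> nat)
    (i j : nat) : R :=
  if Nat.ltb i j then hi (sigma i) (sigma j)
  else if Nat.eqb i j then e else lo (sigma i) (sigma j).

Definition Liu_consistent (op : R -> R -> R) (e : R) (n : nat)
    (lo hi : nat -> nat -> R) : Prop :=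
  G_consistent_PCM op n (Lmat e lo hi (fun i => i)) /\
  G_consistent_PCM op n (Rmat e lo hi (fun i => i)).

Definition approx_consistent (op : R -> R -> R) (e : R) (n : nat)
    (lo hi : nat -> nat -> R) : Prop :=
  exists sigma, is_perm n sigma /\
    G_consistent_PCM op n (Lmat e lo hi sigma) /\
    G_consistent_PCM op n (Rmat e lo hi sigma).

Definition in_prod3 (op : R -> R -> R) (l1 h1 l2 h2 l3 h3 z : R) : Prop :=
  exists x y w, l1 <= x <= h1 /\ l2 <= y <= h2 /\ l3 <= w <= h3 /\
    z = op (op x y) w.

(* [G]-consistency: a_ij (.) a_jk (.) a_ki = a_ik (.) a_kj (.) a_ji as sets. *)
Definition interval_consistent (op : R -> R -> R) (n : nat)
    (lo hi : nat -> nat -> R) : Prop :=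
  forall i j k, (i < n)%nat -> (j < n)%nat -> (k < n)%nat ->
    forall z : R,
      in_prod3 op (lo i j) (hi i j) (lo j k) (hi j k) (lo k i) (hi k i) z <->
      in_prod3 op (lo i k) (hi i k) (lo k j) (hi k j) (lo j i) (hi j i) z.

(* Main.v *)
Require Import Defs.
From Stdlib Require Import Reals.
From Stdlib Require Import Lra Lia List Arith.
From Coquelicot Require Import Rbar.
Open Scope R_scope.

Ltac dHG HG := let Hcl := fresh "Hcl" in let Has := fresh "Has" in
  let Hco := fresh "Hco" in let He := fresh "He" in let Hid := fresh "Hid" in
  let Hinv := fresh "Hinv" in let Hmono := fresh "Hmono" in
  destruct HG as (Hcl & Has & Hco & He & Hid & Hinv & Hmono & _).

Section S.
Context (G : R -> Prop) (op : R -> R -> R) (e : R) (inv : R -> R).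

Lemma mono_r (HG : real_cont_alo_group G op e inv) a b c :
  G a -> G b -> G c -> a <= b -> op c a <= op c b.
Proof. intros; dHG HG. rewrite (Hco c a), (Hco c b) by auto. auto. Qed.

Lemma cancel1 (HG : real_cont_alo_group G op e inv) a c :
  G a -> G c -> op (op a c) (inv c) = a.
Proof. intros; dHG HG. destruct (Hinv c) as [Hi1 Hi2]; auto.
  rewrite Has, Hi2, Hco, Hid; auto. Qed.

Lemma cancel2 (HG : real_cont_alo_group G op e inv) z c :
  G z -> G c -> op (op z (inv c)) c = z.
Proof. intros; dHG HG. destruct (Hinv c) as [Hi1 Hi2]; auto.
  rewrite Has, (Hco (inv c) c), Hi2, Hco, Hid; auto. Qed.

Lemma rot3 (HG : real_cont_alo_group G op e inv) a b c :
  G a -> G b -> G c -> op (op a b) c = op (op b c) a.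
Proof. intros; dHG HG. rewrite Has by auto. rewrite Hco; auto. Qed.

Lemma convex (Hopen : is_open_interval G) l h z : G l -> G h -> l <= z <= h -> G z.
Proof.
  intros Hl Hh Hz. destruct Hopen as (a & b & Hab).
  apply Hab in Hl; apply Hab in Hh; apply Hab.
  destruct Hl as [Hl1 Hl2], Hh as [Hh1 Hh2].
  destruct a, b; simpl in *; split; auto; lra.
Qed.

Lemma prod3_iff (HG : real_cont_alo_group G op e inv) (Hopen : is_open_interval G)
  l1 h1 l2 h2 l3 h3 z :
  G l1 -> G h1 -> G l2 -> G h2 -> G l3 -> G h3 -> l1 <= h1 -> l2 <= h2 -> l3 <= h3 ->
  (in_prod3 op l1 h1 l2 h2 l3 h3 z <->
   op (op l1 l2) l3 <= z <= op (op h1 h2) h3).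
Proof.
  intros G1 G1' G2 G2' G3 G3' L1 L2 L3.
  pose proof (mono_r HG) as MR. pose proof (cancel1 HG) as C1.
  pose proof (cancel2 HG) as C2.
  pose proof HG as HG'. dHG HG'.
  split.
  - intros (x & y & w & Hx & Hy & Hw & ->).
    assert (Gx : G x) by (apply (convex Hopen l1 h1); auto).
    assert (Gy : G y) by (apply (convex Hopen l2 h2); auto).
    assert (Gw : G w) by (apply (convex Hopen l3 h3); auto).
    split.
    + apply Rle_trans with (op (op x l2) l3).
      { apply Hmono; auto. apply Hmono; auto; lra. }
      apply Rle_trans with (op (op x y) l3).
      { apply Hmono; auto. apply MR; auto; lra. }
      apply MR; auto; lra.
    + apply Rle_trans with (op (op h1 y) w).
      { apply Hmono; auto. apply Hmono; auto; lra. }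
      apply Rle_trans with (op (op h1 h2) w).
      { apply Hmono; auto. apply MR; auto; lra. }
      apply MR; auto; lra.
  - intros [Hz1 Hz2].
    assert (Gz : G z) by (apply (convex Hopen (op (op l1 l2) l3) (op (op h1 h2) h3)); auto).
    assert (Gs : G (op l2 l3)) by auto.
    destruct (Hinv (op l2 l3)) as [Gis _]; auto.
    set (t := op z (inv (op l2 l3))).
    assert (Gt : G t) by (unfold t; auto).
    assert (Ht1 : l1 <= t).
    { rewrite <- (C1 l1 (op l2 l3)) by auto. unfold t. apply Hmono; auto.
      rewrite <- Has; auto. }
    destruct (Rle_dec t h1) as [Ht2 | Ht2].
    + exists t, l2, l3. repeat split; try lra.
      rewrite Has by auto. unfold t. rewrite C2; auto.
    + destruct (Hinv h1) as [Gih _]; auto.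
      set (u := op z (inv h1)).
      assert (Gu : G u) by (unfold u; auto).
      assert (Hzt : z = op t (op l2 l3)) by (unfold t; rewrite C2; auto).
      assert (Hu1 : op l2 l3 <= u).
      { rewrite <- (C1 (op l2 l3) h1) by auto. unfold u. apply Hmono; auto.
        rewrite Hzt, (Hco (op l2 l3) h1) by auto. apply Hmono; auto; lra. }
      assert (Gh23 : G (op h2 h3)) by auto.
      assert (Hu2 : u <= op h2 h3).
      { rewrite <- (C1 (op h2 h3) h1) by auto. unfold u. apply Hmono; auto.
        rewrite (Hco (op h2 h3) h1), <- Has; auto. }
      assert (Hzu : z = op h1 u) by (unfold u; rewrite Hco, C2; auto).
      destruct (Hinv l3) as [Gil3 _]; auto.
      set (v := op u (inv l3)).
      assert (Gv : G v) by (unfold v; auto).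
      assert (Hv1 : l2 <= v).
      { rewrite <- (C1 l2 l3) by auto. unfold v. apply Hmono; auto. }
      destruct (Rle_dec v h2) as [Hv2 | Hv2].
      * exists h1, v, l3. repeat split; try lra.
        rewrite Has by auto. unfold v. rewrite C2; auto.
      * destruct (Hinv h2) as [Gih2 _]; auto.
        set (w := op u (inv h2)).
        assert (Gw : G w) by (unfold w; auto).
        assert (Huv : u = op v l3) by (unfold v; rewrite C2; auto).
        exists h1, h2, w. repeat split; try lra.
        -- rewrite <- (C1 l3 h2) by auto. unfold w. apply Hmono; auto.
           rewrite Huv, (Hco l3 h2) by auto. apply Hmono; auto; lra.
        -- rewrite <- (C1 h3 h2) by auto. unfold w. apply Hmono; auto.
           rewrite (Hco h3 h2) by auto. auto.
        -- rewrite Has by auto. unfold w. rewrite (Hco h2), C2; auto.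
Qed.

Definition Eq3 (f : nat -> nat -> R) p q r :=
  op (op (f p q) (f q r)) (f r p) = op (op (f p r) (f r q)) (f q p).

Lemma Eq3_all (HG : real_cont_alo_group G op e inv) n f :
  (forall a b, (a < n)%nat -> (b < n)%nat -> G (f a b)) ->
  (forall p q r, (p < q)%nat -> (q < r)%nat -> (r < n)%nat -> Eq3 f p q r) ->
  forall p q r, (p < n)%nat -> (q < n)%nat -> (r < n)%nat -> Eq3 f p q r.
Proof.
  intros Gf H p q r Hp Hq Hr.
  pose proof (rot3 HG) as RT.
  assert (ROT : forall p q r, (p < n)%nat -> (q < n)%nat -> (r < n)%nat ->
     Eq3 f p q r -> Eq3 f q r p).
  { unfold Eq3; intros a b c Ha Hb Hc E.
    rewrite <- (RT (f a b) (f b c) (f c a)), E, (RT (f b a) (f a c) (f c b)) by auto.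
    reflexivity. }
  assert (SW : forall p q r, Eq3 f p q r -> Eq3 f p r q)
    by (unfold Eq3; intros; symmetry; auto).
  destruct (lt_eq_lt_dec p q) as [[Hpq|Hpq]|Hpq];
  destruct (lt_eq_lt_dec q r) as [[Hqr|Hqr]|Hqr];
  destruct (lt_eq_lt_dec p r) as [[Hpr|Hpr]|Hpr]; subst; try lia;
  first
  [ apply H; lia
  | apply SW; apply H; lia
  | apply ROT; auto; apply H; lia
  | apply ROT; auto; apply ROT; auto; apply H; lia
  | apply SW, ROT; auto; apply H; lia
  | apply SW, ROT; auto; apply ROT; auto; apply H; lia
  | unfold Eq3; first
     [ reflexivity
     | rewrite (RT (f _ _) (f _ _) (f _ _)) by auto; reflexivity
     | rewrite <- (RT (f _ _) (f _ _) (f _ _)) by auto; reflexivity ] ].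
Qed.

End S.

Lemma Lmat_lt e lo hi s a b : (a < b)%nat -> Lmat e lo hi s a b = lo (s a) (s b).
Proof. intros; unfold Lmat; destruct (Nat.ltb_spec a b); [reflexivity|lia]. Qed.
Lemma Lmat_gt e lo hi s a b : (b < a)%nat -> Lmat e lo hi s a b = hi (s a) (s b).
Proof. intros; unfold Lmat; destruct (Nat.ltb_spec a b); [lia|];
  destruct (Nat.eqb_spec a b); [lia|reflexivity]. Qed.
Lemma Rmat_lt e lo hi s a b : (a < b)%nat -> Rmat e lo hi s a b = hi (s a) (s b).
Proof. intros; unfold Rmat; destruct (Nat.ltb_spec a b); [reflexivity|lia]. Qed.
Lemma Rmat_gt e lo hi s a b : (b < a)%nat -> Rmat e lo hi s a b = lo (s a) (s b).
Proof. intros; unfold Rmat; destruct (Nat.ltb_spec a b); [lia|];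
  destruct (Nat.eqb_spec a b); [lia|reflexivity]. Qed.

Lemma perm_surj n s : is_perm n s -> forall i, (i < n)%nat -> exists a, (a < n)%nat /\ s a = i.
Proof.
  intros [Hb Hi] i Hin.
  assert (ND : NoDup (map s (seq 0 n))).
  { apply NoDup_map_NoDup_ForallPairs; [|apply seq_NoDup].
    intros x y Hx Hy. apply in_seq in Hx; apply in_seq in Hy. apply Hi; lia. }
  assert (INC : incl (map s (seq 0 n)) (seq 0 n)).
  { intros x Hx. apply in_map_iff in Hx. destruct Hx as (y & <- & Hy).
    apply in_seq in Hy. apply in_seq. specialize (Hb y). lia. }
  pose proof (NoDup_length_incl (l' := seq 0 n) ND) as H.
  assert (Hin' : In i (seq 0 n)) by (apply in_seq; lia).
  apply H in Hin'; [| rewrite length_map; lia | exact INC].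
  apply in_map_iff in Hin'. destruct Hin' as (a & Ha & Ha').
  apply in_seq in Ha'. exists a; split; [lia|auto].
Qed.

Theorem proposition12 (G : R -> Prop) (op : R -> R -> R) (e : R) (inv : R -> R)
  (HG : real_cont_alo_group G op e inv) (Hopen : is_open_interval G)
  (n : nat) (lo hi : nat -> nat -> R)
  (HA : IPCM G n lo hi) (Hrec : G_reciprocal inv n lo hi) :
  (Liu_consistent op e n lo hi -> approx_consistent op e n lo hi) /\
  (approx_consistent op e n lo hi -> interval_consistent op n lo hi).
Proof.
  split.
  - intros [HL HR]. exists (fun i => i). split; [split; auto|auto].
  - intros (s & Hs & HL & HR) i j k Hi Hj Hk z.
    destruct (HA i j) as (G1 & G1' & L1); auto.
    destruct (HA j k) as (G2 & G2' & L2); auto.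
    destruct (HA k i) as (G3 & G3' & L3); auto.
    destruct (HA i k) as (G4 & G4' & L4); auto.
    destruct (HA k j) as (G5 & G5' & L5); auto.
    destruct (HA j i) as (G6 & G6' & L6); auto.
    rewrite (prod3_iff _ _ _ _ HG Hopen) by auto.
    rewrite (prod3_iff _ _ _ _ HG Hopen) by auto.
    destruct (perm_surj _ _ Hs i Hi) as (p & Hp & <-).
    destruct (perm_surj _ _ Hs j Hj) as (q & Hq & <-).
    destruct (perm_surj _ _ Hs k Hk) as (r & Hr & <-).
    destruct Hs as [Hsb _].
    pose proof HG as HG'. dHG HG'.
    assert (Elo : Eq3 op (fun a b => lo (s a) (s b)) p q r).
    { apply (Eq3_all _ _ _ _ HG) with n; auto.
      - intros a b Ha Hb. apply HA; auto.
      - intros a b c Hab Hbc Hc. unfold Eq3.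
        assert (Ha : (a < n)%nat) by lia. assert (Hb : (b < n)%nat) by lia.
        rewrite <- (Lmat_lt e lo hi s a b), <- (Lmat_lt e lo hi s b c),
          <- (Lmat_lt e lo hi s a c), <- (Rmat_gt e lo hi s c a),
          <- (Rmat_gt e lo hi s c b), <- (Rmat_gt e lo hi s b a) by lia.
        rewrite <- (HL a b c), (HR c b a) by auto.
        rewrite Lmat_lt, Rmat_gt, Rmat_gt by lia.
        rewrite Has; auto; apply HA; auto. }
    assert (Ehi : Eq3 op (fun a b => hi (s a) (s b)) p q r).
    { apply (Eq3_all _ _ _ _ HG) with n; auto.
      - intros a b Ha Hb. apply HA; auto.
      - intros a b c Hab Hbc Hc. unfold Eq3.
        assert (Ha : (a < n)%nat) by lia. assert (Hb : (b < n)%nat) by lia.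
        rewrite <- (Rmat_lt e lo hi s a b), <- (Rmat_lt e lo hi s b c),
          <- (Rmat_lt e lo hi s a c), <- (Lmat_gt e lo hi s c a),
          <- (Lmat_gt e lo hi s c b), <- (Lmat_gt e lo hi s b a) by lia.
        rewrite <- (HR a b c), (HL c b a) by auto.
        rewrite Rmat_lt, Lmat_gt, Lmat_gt by lia.
        rewrite Has; auto; apply HA; auto. }
    unfold Eq3 in Elo, Ehi. rewrite Elo, Ehi. tauto.
Qed.
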